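(* Let $G$ be a graph that has exactly two odd cycles, and suppose these two cycles share no edge. Then the two cycles intersect either in a single vertex or not at all.
   Context: All graphs are finite and simple. An odd cycle is a cycle (subgraph) of odd length. *)

(* Defs.v *)
From mathcomp Require Import all_boot.
Set Implicit Arguments. Unset Strict Implicit. Unset Printing Implicit Defensive.

(* A finite simple graph: vertex type T : finType, adjacency e : rel T
   assumed symmetric and irreflexive (hypotheses of the theorem).
   A cycle (as a subgraph) is identified with its edge set; an edge is
   the 2-element vertex set {x, y}. *)

Definition cycle_edge_set (T : finType) (s : seq T) : {set {set T}} :=
  [set [set x; next s x] | x in s].

Definition odd_cycle (T : finType) (e : rel T) (C : {set {set T}}) : Prop :=
  exists s : seq T,
    [/\ ucycle e s, 3 <= size s, odd (size s) & C = cycle_edge_set s].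

Definition sub_verts (T : finType) (C : {set {set T}}) : {set T} :=
  \bigcup_(E in C) E.

(* Main.v *)
Require Import Defs.
From mathcomp Require Import all_boot.
Set Implicit Arguments. Unset Strict Implicit.

Section Aux.
Variable T : finType.
Implicit Types s p q r : seq T.

Lemma next_head (x : T) l : next (x :: l) x = head x l.
Proof. by case: l => [|y l] /=; rewrite eqxx. Qed.

Lemma next_mid p1 (x : T) p2 : uniq (p1 ++ x :: p2) ->
  next (p1 ++ x :: p2) x = head (head x p1) p2.
Proof.
move=> U; rewrite -(next_rot (size p1) U) rot_size_cat next_head.
by case: (p2).
Qed.

Lemma ces_rot n s : uniq s -> cycle_edge_set (rot n s) = cycle_edge_set s.
Proof.
move=> U; apply/setP => E; rewrite /cycle_edge_set.
apply/imsetP/imsetP => [][x xin ->]; exists x; rewrite ?mem_rot // in xin *;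
  by rewrite next_rot.
Qed.

Lemma sv_mem s x : x \in sub_verts (cycle_edge_set s) -> x \in s.
Proof.
case/bigcupP => E /imsetP [y ys ->]; rewrite !inE => /orP [/eqP->|/eqP->] //.
by rewrite mem_next.
Qed.

Lemma edge_in s x : x \in s -> [set x; next s x] \in cycle_edge_set s.
Proof. by move=> xs; apply: imset_f. Qed.

Lemma split_has (a : pred T) t : has a t ->
  exists q v r, [/\ t = q ++ v :: r, a v & ~~ has a q].
Proof.
elim: t => [|x t IH] //= /orP [ax|/IH [q [v [r [-> av hq]]]]].
  by exists [::], x, t.
case ax: (a x); first by exists [::], x, (q ++ v :: r).
by exists (x :: q), v, r; rewrite /= ax.
Qed.

Lemma head_rev (u : T) q : head u (rev q) = last u q.
Proof. by case/lastP: q => [|q x] //; rewrite rev_rcons last_rcons. Qed.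
End Aux.

Lemma core (T : finType) (e : rel T) (e_sym : symmetric e) (u v : T) p1 p2 q r :
  ucycle e (u :: p1 ++ v :: p2) -> ucycle e (u :: q ++ v :: r) ->
  odd (size (u :: p1 ++ v :: p2)) -> ~~ has (mem (u :: p1 ++ v :: p2)) q ->
  exists s, [/\ ucycle e s, 3 <= size s, odd (size s),
    (exists2 E, E \in cycle_edge_set s & E \in cycle_edge_set (u :: p1 ++ v :: p2)) &
    (exists2 E, E \in cycle_edge_set s & E \in cycle_edge_set (u :: q ++ v :: r))].
Proof.
set s1 := u :: p1 ++ v :: p2; set s2 := u :: q ++ v :: r.
rewrite /ucycle; move=> /andP[c1 U1] /andP[c2 U2] od1 hq.
have Hq : {in q, forall x, x \notin s1} by apply/hasPn.
have := c1; rewrite /s1 /= rcons_cat cat_path /= rcons_path.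
move=> /and4P[P1 e1 P2 e2].
have := c2; rewrite /s2 /= rcons_cat cat_path /= rcons_path.
move=> /and4P[Q eq2 _ _].
have U2' : uniq q by move: U2; rewrite /s2 /= cat_uniq => /andP[_ /and3P[]].
have Hu1 : u \in s1 by rewrite inE eqxx.
have Hv1 : v \in s1 by rewrite /s1 !(inE, mem_cat) eqxx !orbT.
have Hv2 : v \in s2 by rewrite /s2 !(inE, mem_cat) eqxx !orbT.
have Hu2 : u \in s2 by rewrite inE eqxx.
have E1u : [set u; head v p1] \in cycle_edge_set s1.
  by have := edge_in Hu1; rewrite /s1 next_head; case: (p1).
have E1v : [set v; head u p2] \in cycle_edge_set s1.
  have := edge_in Hv1; rewrite /s1 -cat_cons next_mid //.
have E2u : [set u; head v q] \in cycle_edge_set s2.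
  by have := edge_in Hu2; rewrite /s2 next_head; case: (q).
have E2v : [set last u q; v] \in cycle_edge_set s2.
  have Hl : last u q \in s2 by rewrite /s2 -cat_cons mem_cat mem_last.
  have eqs2 : s2 = belast u q ++ last u q :: v :: r.
    by rewrite /s2 -cat_cons lastI cat_rcons.
  have nx : next s2 (last u q) = v.
    by rewrite eqs2 next_mid // -eqs2.
  by have := edge_in Hl; rewrite nx.
have odAB : odd (size (u :: p1 ++ v :: rev q)) || odd (size (v :: p2 ++ u :: q)).
  move: od1; rewrite /s1 /= !size_cat /= size_rev !(oddS, addnS, addSn, oddD).
  by case: (odd (size p1)); case: (odd (size p2)); case: (odd (size q)).
have sz3 n : 2 <= n -> odd n -> 3 <= n by case: n => [|[|[|]]].
have memq x : x \in q -> x \notin s1 by move=> xq; apply: Hq.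
case/orP: odAB => odd_s.
- have UA' : uniq (u :: p1 ++ v :: rev q).
    have eqA : u :: p1 ++ v :: rev q = (u :: p1 ++ [:: v]) ++ rev q.
      by rewrite /= -catA.
    have eqS : s1 = (u :: p1 ++ [:: v]) ++ p2 by rewrite /s1 /= -catA.
    have := U1; rewrite eqS cat_uniq => /and3P[UA _ _].
    rewrite eqA cat_uniq UA rev_uniq U2' andTb andbT; apply/hasPn => x; rewrite mem_rev => xq.
    apply: contra (memq x xq); rewrite eqS mem_cat => h; by rewrite h.
  exists (u :: p1 ++ v :: rev q); split => //.
  + rewrite /ucycle; apply/andP; split => //.
    rewrite /= rcons_cat cat_path /= P1 /= e1 /= -rev_cons.
    have := rev_path e u (rcons q v); rewrite last_rcons belast_rcons => ->.
    rewrite (@eq_path _ _ e) ?rcons_path ?Q ?eq2 //.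
  + by apply: (sz3 _ _ odd_s); rewrite /= size_cat /= addnS.
  + exists [set u; head v p1] => //.
    by have := edge_in (mem_head u (p1 ++ v :: rev q)); rewrite next_head; case: (p1).
  + exists [set last u q; v] => //.
    have Hv : v \in u :: p1 ++ v :: rev q by rewrite !(inE, mem_cat) eqxx !orbT.
    have := edge_in Hv; rewrite -cat_cons next_mid //= head_rev setUC //.
- have UB' : uniq (v :: p2 ++ u :: q).
    have eqS : rot (size (u :: p1)) s1 = (v :: p2 ++ [:: u]) ++ p1.
      by rewrite /s1 -cat_cons rot_size_cat /= -catA.
    have := U1; rewrite -(rot_uniq (size (u :: p1))) eqS cat_uniq => /and3P[UB _ _].
    have -> : v :: p2 ++ u :: q = (v :: p2 ++ [:: u]) ++ q by rewrite /= -catA.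
    rewrite cat_uniq UB U2' andTb andbT; apply/hasPn => x xq.
    apply: contra (memq x xq) => xin.
    by rewrite -(mem_rot (size (u :: p1))) eqS mem_cat xin.
  exists (v :: p2 ++ u :: q); split => //.
  + rewrite /ucycle; apply/andP; split => //.
    by rewrite /= rcons_cat cat_path /= P2 /= e2 /= rcons_path Q eq2.
  + by apply: (sz3 _ _ odd_s); rewrite /= size_cat /= addnS.
  + exists [set v; head u p2] => //.
    by have := edge_in (mem_head v (p2 ++ u :: q)); rewrite next_head; case: (p2).
  + exists [set u; head v q] => //.
    have Hu : u \in v :: p2 ++ u :: q by rewrite !(inE, mem_cat) eqxx !orbT.
    by have := edge_in Hu; rewrite -cat_cons next_mid.
Qed.

Theorem lemma2p1 (T : finType) (e : rel T)
  (e_sym : symmetric e) (e_irr : irreflexive e)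
  (C1 C2 : {set {set T}}) :
  odd_cycle e C1 -> odd_cycle e C2 -> C1 != C2 ->
  (forall C, odd_cycle e C -> C = C1 \/ C = C2) ->
  C1 :&: C2 = set0 ->
  #|sub_verts C1 :&: sub_verts C2| <= 1.
Proof.
move=> [s1 [uc1 _ od1 ->]] [s2 [uc2 _ _ ->]] _ all dis.
rewrite leqNgt; apply/negP => /card_gt1P [u [v [/setIP [u1 u2] /setIP [v1 v2] uv]]].
move: (sv_mem u1) (sv_mem u2) (sv_mem v1) (sv_mem v2) => {u1 u2 v1 v2} u1 u2 v1 v2.
have U1 : uniq s1 by case/andP: uc1.
have U2 : uniq s2 by case/andP: uc2.
case: (rot_to u1) => i1 p E1; case: (rot_to u2) => i2 t E2.
rewrite -(ces_rot i1 U1) -(ces_rot i2 U2) E1 E2 in all dis *.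
have uc1' : ucycle e (u :: p) by rewrite -E1 rot_ucycle.
have uc2' : ucycle e (u :: t) by rewrite -E2 rot_ucycle.
have od1' : odd (size (u :: p)) by rewrite -E1 size_rot.
have Ut : uniq (u :: t) by rewrite -E2 rot_uniq.
have vp : v \in u :: p by rewrite -E1 mem_rot.
have vt : v \in t.
  by move: v2; rewrite -(mem_rot i2) E2 inE eq_sym (negbTE uv).
have hs : has (mem (u :: p)) t by apply/hasP; exists v.
case: (split_has hs) => q [w [r [Et wp hq]]].
have wu : w != u.
  by apply/eqP => wu; move: Ut; rewrite /= Et mem_cat inE -wu eqxx orbT.
have wp' : w \in p by have : w \in u :: p := wp; rewrite in_cons (negbTE wu).
case/splitPr: wp' => p1 p2 in uc1' od1' hq all dis *.
rewrite Et in uc2' all dis *.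
have [s [ucs sz ods [E Es E1'] [E' Es' E2']]] := core e_sym uc1' uc2' od1' hq.
have oc : odd_cycle e (cycle_edge_set s) by exists s.
case: (all _ oc) => Eq; rewrite Eq in Es Es'.
  have : E' \in set0 by rewrite -dis inE Es' E2'.
  by rewrite inE.
have : E \in set0 by rewrite -dis inE Es E1'.
by rewrite inE.
Qed.
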